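(* Let $a,b>0$ with $\min(a,b)\ge 1$, let $s\in\mathbb{R}$ and let $\gamma>0$ be a constant. Then the function $$ g(x)=\gamma\left(\left(\tfrac{a}{2}\right)^2+\left(\tfrac{x}{2}\right)^2\right)^{\frac{a-1}{2}}\left(\left(\tfrac{b}{2}\right)^2+\left(\tfrac{s-x}{2}\right)^2\right)^{\frac{b-1}{2}}e^{-x\arctan\left(\frac{x}{a}\right)-(s-x)\arctan\left(\frac{s-x}{b}\right)},\quad x\in\mathbb{R}, $$ is log-concave on $\mathbb{R}$.
   Context: A positive function $g$ on $\mathbb{R}$ is log-concave if $\log g$ is concave. *)

(* Defs.v *)
From Stdlib Require Import Reals.
Open Scope R_scope.

Definition concave_on_R (f : R -> R) : Prop :=
  forall x y t, 0 <= t <= 1 ->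
    t * f x + (1 - t) * f y <= f (t * x + (1 - t) * y).

Definition log_concave (g : R -> R) : Prop :=
  (forall x, 0 < g x) /\ concave_on_R (fun x => ln (g x)).

Definition gfun (a b s gamma : R) (x : R) : R :=
  gamma
  * Rpower ((a / 2) ^ 2 + (x / 2) ^ 2) ((a - 1) / 2)
  * Rpower ((b / 2) ^ 2 + ((s - x) / 2) ^ 2) ((b - 1) / 2)
  * exp (- x * atan (x / a) - (s - x) * atan ((s - x) / b)).

(* Main.v *)
Require Import Defs.
From Stdlib Require Import Reals.
From Stdlib Require Import Lra Psatz.
From Coquelicot Require Import Coquelicot.
Open Scope R_scope.
Definition F c x := (c-1)/2 * ln ((c/2)^2+(x/2)^2) - x*atan(x/c).
Definition F1 c x := -x/(c^2+x^2) - atan(x/c).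
Definition F2 c x := -(c^2+c^3+(c-1)*x^2)/(c^2+x^2)^2.
Lemma dF c x : 0 < c -> is_derive (F c) x (F1 c x).
Proof. intros hc. unfold F, F1. auto_derive.
- assert (0 <= (x/2)^2) by (apply pow2_ge_0). assert (0 < (c/2)^2) by (apply pow_lt; lra). lra.
- assert (0 < c^2+x^2) by (assert (0 < c^2) by (apply pow_lt; lra); nra).
  change (x / c) with (x * / c). field. split; lra.
Qed.
Lemma dF1 c x : 0 < c -> is_derive (F1 c) x (F2 c x).
Proof. intros hc. unfold F1, F2. auto_derive.
- assert (0 < c^2+x^2) by (assert (0 < c^2) by (apply pow_lt; lra); nra). lra.
- assert (0 < c^2+x^2) by (assert (0 < c^2) by (apply pow_lt; lra); nra).
  field. split; lra.
Qed.

Lemma concave_deriv2 (h h1 h2 : R -> R) :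
  (forall x, derivable_pt_lim h x (h1 x)) ->
  (forall x, derivable_pt_lim h1 x (h2 x)) ->
  (forall x, h2 x <= 0) -> concave_on_R h.
Proof.
  intros d1 d2 neg.
  assert (mono : forall x y, x < y -> h1 y <= h1 x).
  { intros x y hxy. destruct (MVT_cor2 h1 h2 x y hxy (fun c _ => d2 c)) as [c [hc _]].
    specialize (neg c). nra. }
  assert (main : forall x y t, x < y -> 0 < t < 1 ->
    t * h x + (1 - t) * h y <= h (t * x + (1 - t) * y)).
  { intros x y t hxy ht. set (z := t * x + (1 - t) * y).
    assert (hxz : x < z) by (unfold z; nra).
    assert (hzy : z < y) by (unfold z; nra).
    destruct (MVT_cor2 h h1 x z hxz (fun c _ => d1 c)) as [c1 [e1 [_ hc1]]].
    destruct (MVT_cor2 h h1 z y hzy (fun c _ => d1 c)) as [c2 [e2 [hc2 _]]].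
    assert (m := mono c1 c2 ltac:(lra)).
    assert (ez : z - x = (1 - t) * (y - x)) by (unfold z; ring).
    assert (ey : y - z = t * (y - x)) by (unfold z; ring).
    rewrite ez in e1. rewrite ey in e2.
    assert (p : 0 <= t * (1 - t) * (y - x)) by (apply Rmult_le_pos; nra).
    assert (q : t * h x + (1 - t) * h y - h z = t * (1 - t) * (y - x) * (h1 c2 - h1 c1)) by nra.
    nra. }
  intros x y t ht.
  destruct (Req_dec t 0) as [->|ht0].
  { replace (0 * x + (1 - 0) * y) with y by ring. lra. }
  destruct (Req_dec t 1) as [->|ht1].
  { replace (1 * x + (1 - 1) * y) with x by ring. lra. }
  destruct (Rtotal_order x y) as [hxy|[->|hxy]].
  - apply main; lra.
  - replace (t * y + (1 - t) * y) with y by ring. lra.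
  - replace (t * x + (1 - t) * y) with ((1 - t) * y + (1 - (1 - t)) * x) by ring.
    replace (t * h x + (1 - t) * h y) with ((1 - t) * h y + (1 - (1 - t)) * h x) by ring.
    apply main; lra.
Qed.

Lemma F2_nonpos c x : 1 <= c -> F2 c x <= 0.
Proof.
  intros hc. unfold F2.
  assert (0 < c^2+x^2) by (assert (0 < c^2) by (apply pow_lt; lra); nra).
  assert (0 < (c^2+x^2)^2) by (apply pow_lt; lra).
  assert (0 <= (c-1)*x^2) by (apply Rmult_le_pos; [lra| apply pow2_ge_0]).
  assert (0 < c^2+c^3) by (assert (0 < c^2) by (apply pow_lt; lra); assert (0 < c^3) by (apply pow_lt; lra); lra).
  unfold Rdiv.
  assert (0 <= (c ^ 2 + c ^ 3 + (c - 1) * x ^ 2) * / (c ^ 2 + x ^ 2) ^ 2).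
  { apply Rmult_le_pos; [lra|]. left; apply Rinv_0_lt_compat; lra. }
  replace (- (c ^ 2 + c ^ 3 + (c - 1) * x ^ 2) * / (c ^ 2 + x ^ 2) ^ 2)
    with (- ((c ^ 2 + c ^ 3 + (c - 1) * x ^ 2) * / (c ^ 2 + x ^ 2) ^ 2)) by ring.
  lra.
Qed.

Theorem lemma1 (a b s gamma : R) (ha : 0 < a) (hb : 0 < b)
  (hmin : 1 <= Rmin a b) (hgamma : 0 < gamma) :
  log_concave (gfun a b s gamma).
Proof.
  assert (ha1 : 1 <= a) by (apply Rle_trans with (Rmin a b); [lra | apply Rmin_l]).
  assert (hb1 : 1 <= b) by (apply Rle_trans with (Rmin a b); [lra | apply Rmin_r]).
  assert (posA : forall c y, 0 < c -> 0 < (c/2)^2 + (y/2)^2).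
  { intros c y hc. assert (0 <= (y/2)^2) by apply pow2_ge_0.
    assert (0 < (c/2)^2) by (apply pow_lt; lra). lra. }
  split.
  - intros x. unfold gfun, Rpower.
    repeat apply Rmult_lt_0_compat; try apply exp_pos; lra.
  - set (L := fun x => ln gamma + F a x + F b (s - x)).
    assert (eqL : forall x, ln (gfun a b s gamma x) = L x).
    { intros x. unfold gfun, Rpower, L, F.
      rewrite !ln_mult; try apply exp_pos; try lra;
        try (repeat apply Rmult_lt_0_compat; try apply exp_pos; lra).
      rewrite !ln_exp. ring. }
    intros x y t ht. rewrite !eqL. revert x y t ht.
    apply (concave_deriv2 L (fun x => F1 a x - F1 b (s - x))
                            (fun x => F2 a x + F2 b (s - x))).
    + intros x. apply is_derive_Reals.
      assert (hl : is_derive (fun x : R => s - x) x (-1)) by (auto_derive; [exact I| ring]).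
      pose proof (is_derive_comp (F b) (fun x => s - x) x _ _ (dF b (s - x) hb) hl) as H1.
      pose proof (is_derive_plus _ _ x _ _ (is_derive_const (ln gamma) x) (dF a x ha)) as H2.
      pose proof (is_derive_plus _ _ x _ _ H2 H1) as H3.
      replace (F1 a x - F1 b (s - x)) with (plus (plus zero (F1 a x)) (scal (-1) (F1 b (s - x)))).
      exact H3.
      change (0 + F1 a x + -1 * F1 b (s - x) = F1 a x - F1 b (s - x)). ring.
    + intros x. apply is_derive_Reals.
      assert (hl : is_derive (fun x : R => s - x) x (-1)) by (auto_derive; [exact I| ring]).
      pose proof (is_derive_comp (F1 b) (fun x => s - x) x _ _ (dF1 b (s - x) hb) hl) as H1.
      pose proof (is_derive_minus _ _ x _ _ (dF1 a x ha) H1) as H3.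
      replace (F2 a x + F2 b (s - x)) with (minus (F2 a x) (scal (-1) (F2 b (s - x)))).
      exact H3.
      change (F2 a x - (-1 * F2 b (s - x)) = F2 a x + F2 b (s - x)). ring.
    + intros x. pose proof (F2_nonpos a x ha1). pose proof (F2_nonpos b (s - x) hb1). lra.
Qed.
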